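(* For all positive integers $d$ and $k$ and every finite graph $G$ with $\alpha^{\ast}(G)\le d$ and $\mathsf{rw}(G)\le k$, we have $\alpha\text{-}\mathsf{tw}(G)\le 3dk$.
   Context: $\alpha^{\ast}(G)=\max_{v}\alpha(G[N[v]])$ (local independence number). $\alpha\text{-}\mathsf{tw}(G)$ is the minimum, over all tree-decompositions $(T,\beta)$ of $G$, of $\max_t\alpha(G[\beta(t)])$. For $X\subseteq V(G)$, the cutrank of $X$ is the $\mathbb{F}_2$-rank of the submatrix of the adjacency matrix with rows $X$ and columns $V(G)\setminus X$. A rank-decomposition of $G$ is a pair $(T,\delta)$ with $T$ a tree whose internal nodes have degree $3$ and $\delta$ a bijection from the leaves of $T$ to $V(G)$; each edge $e$ of $T$ splits the leaves into two sides, and its cutrank is the cutrank of the image under $\delta$ of one side. The width is the maximum cutrank of an edge of $T$, and the rankwidth $\mathsf{rw}(G)$ is the minimum width of a rank-decomposition. *)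

(* Defs.v *)
From mathcomp Require Import all_boot all_order all_algebra.
Set Implicit Arguments. Unset Strict Implicit. Unset Printing Implicit Defensive.
Import GRing.Theory.

Definition simple_graph (V : finType) (e : rel V) : Prop :=
  symmetric e /\ irreflexive e.

Definition independent (V : finType) (e : rel V) (S : {set V}) : bool :=
  [forall x in S, forall y in S, ~~ e x y].

Definition alpha (V : finType) (e : rel V) (A : {set V}) : nat :=
  \max_(S : {set V} | (S \subset A) && independent e S) #|S|.

Definition cnbhd (V : finType) (e : rel V) (v : V) : {set V} :=
  v |: [set u | e v u].

Definition alpha_star (V : finType) (e : rel V) : nat :=
  \max_(v : V) alpha e (cnbhd e v).

Definition has_cycle (N : finType) (t : rel N) : Prop :=
  exists (x : N) (p : seq N),
    [&& path t x p, uniq (x :: p), 2 <= size p & t (last x p) x].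

Definition is_tree (N : finType) (t : rel N) : Prop :=
  [/\ 0 < #|N|, symmetric t, irreflexive t,
      (forall a b : N, connect t a b) & ~ has_cycle t].

Definition tree_decomposition (V : finType) (e : rel V)
    (N : finType) (t : rel N) (beta : N -> {set V}) : Prop :=
  [/\ is_tree t,
      (forall v : V, exists n : N, v \in beta n),
      (forall u v : V, e u v -> exists n : N, (u \in beta n) && (v \in beta n)) &
      (forall (v : V) (a b : N), v \in beta a -> v \in beta b ->
         connect (fun x y => [&& t x y, v \in beta x & v \in beta y]) a b)].

(* alpha-tw(G) <= w  :  the minimum over tree decompositions of the maximum
   alpha of a bag is at most w, i.e. some tree decomposition has all bags
   with alpha at most w. *)
Definition alpha_tw_le (V : finType) (e : rel V) (w : nat) : Prop :=
  exists (N : finType) (t : rel N) (beta : N -> {set V}),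
    tree_decomposition e t beta /\ forall n : N, alpha e (beta n) <= w.

Definition cut_matrix (V : finType) (e : rel V) (X : {set V})
    : 'M['F_2]_(#|X|, #|~: X|) :=
  \matrix_(i < #|X|, j < #|~: X|)
     ((e (enum_val i) (enum_val j) : nat)%:R)%R.

Definition cutrank (V : finType) (e : rel V) (X : {set V}) : nat :=
  \rank (cut_matrix e X).

Definition degree (N : finType) (t : rel N) (n : N) : nat := #|[set m | t n m]|.

Definition is_leaf (N : finType) (t : rel N) (n : N) : bool := degree t n <= 1.

Definition edge_side (N : finType) (t : rel N) (a b : N) : {set N} :=
  [set x | connect (fun x y => [&& t x y, ~~ ((x == a) && (y == b))
                                        & ~~ ((x == b) && (y == a))]) a x].

(* A rank-decomposition (T, delta) of G, given via the inverse bijection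
   lam : V -> leaves of T. *)
Definition rank_decomposition (V : finType) (N : finType) (t : rel N)
    (lam : V -> N) : Prop :=
  [/\ is_tree t,
      (forall n : N, ~~ is_leaf t n -> degree t n = 3),
      injective lam &
      (forall n : N, is_leaf t n <-> exists v : V, lam v = n)].

Definition rd_width_le (V : finType) (e : rel V) (N : finType) (t : rel N)
    (lam : V -> N) (k : nat) : Prop :=
  forall a b : N, t a b ->
    cutrank e [set v | lam v \in edge_side t a b] <= k.

(* rw(G) <= k; graphs with at most one vertex have rankwidth 0 by convention *)
Definition rankwidth_le (V : finType) (e : rel V) (k : nat) : Prop :=
  #|V| <= 1 \/
  exists (N : finType) (t : rel N) (lam : V -> N),
    rank_decomposition t lam /\ rd_width_le e t lam k.

(* Main.v *)
Require Import Defs.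
From mathcomp Require Import all_boot all_order all_algebra.
From mathcomp Require Import zify.
Set Implicit Arguments. Unset Strict Implicit. Unset Printing Implicit Defensive.
Import GRing.Theory.

Lemma cut_basis (V : finType) (e : rel V) (X : {set V}) :
  exists J : {set V}, [/\ J \subset ~: X, #|J| <= cutrank e X &
    forall a w, a \in X -> w \notin X -> e a w -> exists2 b, b \in J & e a b].
Proof.
set A := ((cut_matrix e X)^T)%R.
pose f := maxrankfun A.
exists [set enum_val (f l) | l : 'I_(\rank A)]; split.
- apply/subsetP => x /imsetP [l _ ->]; exact: enum_valP.
- rewrite /cutrank -(mxrank_tr (cut_matrix e X)) -/A.
  by rewrite (leq_trans (leq_imset_card _ _)) // card_ord.
move=> a w Ha Hw Haw.
have Hw' : w \in ~: X by rewrite in_setC.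
pose i := enum_rank_in Ha a. pose j := enum_rank_in Hw' w.
have Aji : A j i = 1%R.
  by rewrite /A /cut_matrix !mxE !enum_rankK_in // Haw.
have := eq_maxrowsub A; move/eqmxP/andP => [_ /submxP [D HD]].
have : ((D *m rowsub f A) j i != 0)%R by rewrite -HD Aji oner_eq0.
rewrite mxE.
case: (boolP [exists l, A (f l) i != 0%R]).
  move=> /existsP [l Hl] _; exists (enum_val (f l)).
    by apply/imsetP; exists l.
  move: Hl; rewrite /A /cut_matrix !mxE enum_rankK_in //.
  by case: (e a _).
move=> /existsPn Hn; rewrite big1 ?eqxx // => l _.
move: (Hn l); rewrite negbK => /eqP.
rewrite !mxE => H0; by rewrite H0 mulr0.
Qed.
Section Alpha.
Variables (V : finType) (e : rel V).

Lemma indep_sub (S T : {set V}) : S \subset T -> independent e T -> independent e S.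
Proof.
move=> /subsetP sST /forall_inP H; apply/forall_inP => x xS.
apply/forall_inP => y yS; exact: (forall_inP (H x (sST x xS)) y (sST y yS)).
Qed.

Lemma alpha_card (A : {set V}) : alpha e A <= #|A|.
Proof.
apply/bigmax_leqP => S /andP [sSA _]; exact: subset_leq_card.
Qed.

Lemma alpha_mono (A B : {set V}) : A \subset B -> alpha e A <= alpha e B.
Proof.
move=> sAB; apply/bigmax_leqP => S /andP [sSA iS].
apply: (@leq_bigmax_cond _ (fun S : {set V} => (S \subset B) && independent e S) (fun S => #|S|)).
by rewrite (subset_trans sSA sAB) iS.
Qed.

Lemma alpha_ge (A S : {set V}) : S \subset A -> independent e S -> #|S| <= alpha e A.
Proof.
move=> sSA iS.
apply: (@leq_bigmax_cond _ (fun S : {set V} => (S \subset A) && independent e S) (fun S => #|S|)).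
by rewrite sSA iS.
Qed.

Lemma alphaU (A B : {set V}) : alpha e (A :|: B) <= alpha e A + alpha e B.
Proof.
apply/bigmax_leqP => S /andP [sSAB iS].
have -> : S = (S :&: A) :|: (S :&: B) by rewrite -setIUr; apply/esym/setIidPl.
apply: leq_trans (leq_card_setU _ _) _.
apply: leq_add; apply: alpha_ge; rewrite ?subsetIr //; apply: indep_sub iS; exact: subsetIl.
Qed.

Lemma alpha0 : alpha e set0 = 0.
Proof. by apply/eqP; rewrite -leqn0 (leq_trans (alpha_card _)) // cards0. Qed.

Lemma alpha_bigcup (I : finType) (P : pred I) (F : I -> {set V}) :
  alpha e (\bigcup_(i | P i) F i) <= \sum_(i | P i) alpha e (F i).
Proof.
apply: (big_ind2 (fun A n => alpha e A <= n)).
- by rewrite alpha0.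
- move=> A1 n1 A2 n2 H1 H2; apply: leq_trans (alphaU _ _) _; exact: leq_add.
- by [].
Qed.

Lemma alpha_cnbhd v : alpha e (cnbhd e v) <= alpha_star e.
Proof. exact: (@leq_bigmax _ (fun v => alpha e (cnbhd e v))). Qed.

End Alpha.
Section Tree.
Variables (N : finType) (t : rel N).
Hypothesis tr : is_tree t.

Definition av (a b : N) : rel N := fun x y =>
  [&& t x y, ~~ ((x == a) && (y == b)) & ~~ ((x == b) && (y == a))].

Lemma tsym : symmetric t. Proof. by case: tr. Qed.
Lemma tirr : irreflexive t. Proof. by case: tr. Qed.

Lemma inS a b x : (x \in edge_side t a b) = connect (av a b) a x.
Proof. by rewrite inE. Qed.

Lemma av_swap a b : av a b =2 av b a.
Proof. by move=> x y; rewrite /av; congr (_ && _); rewrite andbC. Qed.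

Lemma av_sym a b : symmetric (av a b).
Proof.
move=> x y; rewrite /av tsym; congr (_ && _).
by rewrite andbC (andbC (x == a)) (andbC (x == b)).
Qed.

Lemma av_t a b : subrel (av a b) t.
Proof. by move=> x y /andP []. Qed.

Lemma no_return a b : t a b -> ~~ connect (av a b) a b.
Proof.
move=> tab; apply/negP => /connectP [p Hp Hl].
case: (shortenP Hp) Hl => p' Hp' Hu _ Hl.
case: tr => _ _ _ _; apply; exists a, p'.
rewrite (sub_path (@av_t a b) Hp') Hu -Hl tsym tab andbT /=.
case: p' Hp' Hu Hl => [|y [|z q]] //=.
  by move=> _ _ Hab; move: tab; rewrite Hab tirr.
by rewrite andbT /av => /and3P [_ /negP H _] _ Hb; case: H; rewrite Hb !eqxx.
Qed.

Lemma side_cover_gen a b y p : t a b -> path t y p ->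
  (y \in edge_side t a b) || (y \in edge_side t b a) ->
  (last y p \in edge_side t a b) || (last y p \in edge_side t b a).
Proof.
move=> tab; elim: p y => //= z p IH y /andP [tyz Hp] Hy; apply: IH => //.
have [Hzab|] := boolP ((y == a) && (z == b) || (y == b) && (z == a)).
  case/orP: Hzab => /andP [_ /eqP ->]; rewrite !inS connect0 ?orbT //.
rewrite negb_or => /andP [H1 H2].
have ayz : av a b y z by rewrite /av tyz H1 H2.
case/orP: Hy; rewrite !inS => Hy.
  by rewrite (connect_trans Hy (connect1 ayz)).
by rewrite (connect_trans Hy (connect1 _)) ?orbT // -av_swap.
Qed.

Lemma side_cover a b x : t a b -> (x \in edge_side t a b) || (x \in edge_side t b a).
Proof.
move=> tab; case: tr => _ _ _ conn _.
have /connectP [p Hp ->] := conn a x.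
by apply: side_cover_gen => //; rewrite inS connect0.
Qed.

Lemma side_disj a b x : t a b -> x \in edge_side t a b -> x \in edge_side t b a -> False.
Proof.
move=> tab; rewrite !inS => H1 H2.
have H2' : connect (av a b) b x by rewrite (eq_connect (@av_swap a b)).
have symc := sym_connect_sym (@av_sym a b).
move: (no_return tab); rewrite (connect_trans H1 _) //.
by rewrite symc.
Qed.

Lemma path_avoid m n y p : path t y p -> m \notin y :: p -> path (av m n) y p.
Proof.
elim: p y => //= z p IH y /andP [tyz Hp]; rewrite !inE negb_or => /andP [ym].
rewrite negb_or => /andP [zm Hm]; rewrite IH ?inE ?negb_or ?zm // andbT.
rewrite /av tyz (eq_sym y) (negPf ym) /=. by case: (y == n); rewrite /= ?andbT /= ?(eq_sym z) ?(negPf zm).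
Qed.

Lemma sub_side m n n' : t m n -> t m n' -> n' != n ->
  edge_side t n' m \subset edge_side t m n.
Proof.
move=> tmn tmn' nn; apply/subsetP => x; rewrite !inS => /connectP [p Hp ->].
have Hm : m \notin n' :: p.
  apply/negP => /(path_connect Hp) Hc.
  have tnm : t n' m by rewrite tsym. by move: (no_return tnm) => /negP; apply.
have step : av m n m n'.
  rewrite /av tmn' eqxx (negPf nn) /=.
  by case: eqP => // E; move: tmn; rewrite E tirr.
apply: (connect_trans (connect1 step)); apply/connectP; exists p => //.
apply: path_avoid => //; exact: (sub_path (@av_t n' m) Hp).
Qed.

Lemma sub_side_proper m n n' : t m n -> t m n' -> n' != n ->
  #|edge_side t n' m| < #|edge_side t m n|.
Proof.
move=> tmn tmn' nn; apply: proper_card; rewrite properE sub_side //=.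
apply/subsetPn; exists m; first by rewrite inS connect0.
have tnm : t n' m by rewrite tsym.
by rewrite inS; exact: no_return tnm.
Qed.

Lemma next_step m n l : t m n -> l \in edge_side t m n -> l != m ->
  exists n', [/\ t m n', n' != n & l \in edge_side t n' m].
Proof.
move=> tmn; rewrite inS => /connectP [p Hp ->].
case: (shortenP Hp) => p' Hp' Hu _.
case: p' Hp' Hu => [|n' q] /=; first by rewrite eqxx.
move=> /andP [/and3P [tmn' H1 _] Hq] /andP [Hm _] _.
exists n'; split => //.
  by apply: contra H1 => /eqP ->; rewrite !eqxx.
rewrite inS; apply/connectP; exists q => //.
rewrite (eq_path (@av_swap n' m)); apply: path_avoid => //; exact: (sub_path (@av_t m n) Hq).
Qed.

Lemma leaf_side n m x : is_leaf t n -> t n m -> x \in edge_side t n m -> x = n.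
Proof.
move=> Hl tnm; rewrite inS => /connectP [[|y q] //= /andP [/and3P [tny H1 _] _] _].
exfalso; move: Hl; rewrite /is_leaf /degree.
have ym : y != m by apply: contra H1 => /eqP ->; rewrite !eqxx.
suff : 1 < #|[set z | t n z]| by rewrite ltnNge => /negPf ->.
apply: (@leq_trans #|[set y; m]|); first by rewrite cards2 ym.
by apply: subset_leq_card; apply/subsetP => z; rewrite !inE => /orP [] /eqP ->.
Qed.

Lemma nbr_exists n x : x != n -> exists m, t n m.
Proof.
move=> xn; case: tr => _ _ _ conn _.
have /connectP [[|y q] /= Hp Hx] := conn n x; first by move: xn; rewrite Hx eqxx.
by exists y; case/andP: Hp.
Qed.

End Tree.

Definition bdry (V : finType) (e : rel V) (X : {set V}) : {set V} :=
  [set a in X | [exists w, (w \notin X) && e a w]].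

Lemma alpha_bdry (V : finType) (e : rel V) (X : {set V}) : symmetric e ->
  alpha e (bdry e X) <= cutrank e X * alpha_star e.
Proof.
move=> esym; have [J [_ HJ HJe]] := cut_basis e X.
have sub : bdry e X \subset \bigcup_(b in J) cnbhd e b.
  apply/subsetP => a; rewrite inE => /andP [aX /existsP [w /andP [wX eaw]]].
  have [b bJ eab] := HJe a w aX wX eaw.
  by apply/bigcupP; exists b => //; rewrite /cnbhd !inE esym eab orbT.
apply: leq_trans (alpha_mono e sub) _.
apply: leq_trans (alpha_bigcup e _ _) _.
apply: (@leq_trans (\sum_(b in J) alpha_star e)); first by apply: leq_sum => b _; exact: alpha_cnbhd.
by rewrite sum_nat_const leq_mul2r HJ orbT.
Qed.

Unset Implicit Arguments.

Theorem theorem8p2 (d k : nat) (V : finType) (e : rel V) :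
  0 < d -> 0 < k -> simple_graph e ->
  alpha_star e <= d -> rankwidth_le e k ->
  alpha_tw_le e (3 * d * k).
Proof.
move=> d0 k0 [esym eirr] Had [HV | [N [t [lam [[tr Hdeg laminj Hleaf] Hwid]]]]].
  exists unit, [rel x y : unit | false], (fun _ => setT); split.
    split.
    - split => //; first by rewrite card_unit.
      + by move=> [] []; exact: connect0.
      + by move=> [x [[|y [|z p]] /and4P [Hp _ Hs _]]].
    - by move=> v; exists tt; rewrite inE.
    - by move=> u v _; exists tt; rewrite !inE.
    - by move=> v [] [] _ _; exact: connect0.
  move=> n; apply: leq_trans (alpha_card _ _) _; rewrite cardsT.
  apply: leq_trans HV _; by rewrite !muln_gt0 d0 k0.
pose X a b := [set v | lam v \in edge_side t a b].
pose B n := [set v | lam v == n] :|: \bigcup_(m in [set m | t n m]) bdry e (X m n).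
have tsym' := tsym tr.
have inB : forall v w n m, t n m -> lam v \in edge_side t m n -> e v w ->
    lam w \in edge_side t n m -> v \in B n.
  move=> v w n m tnm Hv evw Hw; rewrite inE; apply/orP; right.
  apply/bigcupP; exists m; first by rewrite inE.
  rewrite inE inE Hv; apply/existsP; exists w; rewrite evw andbT inE.
  apply/negP => H; have tmn : t m n by rewrite tsym'.
  exact: (side_disj tr tmn H Hw).
exists N, t, B; split; [split|].
- exact: tr.
- by move=> v; exists (lam v); rewrite !inE eqxx.
- move=> u v euv.
  have uv : u != v by apply/eqP => E; move: euv; rewrite E eirr.
  have luv : lam v != lam u by apply/eqP => /laminj E; move: uv; rewrite E eqxx.
  have [m tnm] := nbr_exists tr luv.
  have lf : is_leaf t (lam u) by apply/Hleaf; exists u.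
  have tmn : t m (lam u) by rewrite tsym'.
  have vS : lam v \in edge_side t m (lam u).
    case/orP: (side_cover tr (lam v) tmn) => // /(leaf_side lf tnm) E.
    by move: luv; rewrite E eqxx.
  have uS : lam u \in edge_side t (lam u) m by rewrite inS connect0.
  exists (lam u); apply/andP; split; first by rewrite !inE eqxx.
  by apply: (inB v u _ m) => //; rewrite esym.
- move=> v.
  pose R := fun x y => [&& t x y, v \in B x & v \in B y].
  have main : forall s m n, #|edge_side t m n| < s -> t n m ->
      lam v \in edge_side t m n ->
      (exists w, e v w && (lam w \in edge_side t n m)) -> connect R n (lam v).
    elim => [|s IH] m n Hs tnm Hl [w /andP [evw Hw]]; first by rewrite ltn0 in Hs.
    have vBn := inB v w n m tnm Hl evw Hw.
    have tmn : t m n by rewrite tsym'.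
    case: (eqVneq (lam v) m) => [E | ne].
      by apply: connect1; rewrite /R /=; apply/and3P; split => //; [rewrite E | rewrite !inE eqxx].
    have [n' [tmn' n'n Hl']] := next_step tmn Hl ne.
    have nn' : n != n' by rewrite eq_sym.
    have Hw' : lam w \in edge_side t m n' := subsetP (sub_side tr tmn' tmn nn') _ Hw.
    have lt := sub_side_proper tr tmn tmn' n'n.
    have vBm := inB v w m n' tmn' Hl' evw Hw'.
    have Rnm : R n m by rewrite /R /= tnm vBn vBm.
    apply: (connect_trans (connect1 Rnm)).
    apply: (IH n' m) => //; first by apply: leq_trans lt _.
    by exists w; rewrite evw.
  have toL : forall a, v \in B a -> connect R a (lam v).
    move=> a; rewrite inE inE => /orP [/eqP <-|]; first exact: connect0.
    move=> /bigcupP [m]; rewrite inE => tam; rewrite inE inE => /andP [Hx /existsP [w /andP [wX evw]]].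
    have tma : t m a by rewrite tsym'.
    apply: (main (#|edge_side t m a|).+1 m a) => //.
    exists w; rewrite evw /=.
    move: wX; rewrite inE.
    by case/orP: (side_cover tr (lam w) tma) => ->.
  have Rsym : symmetric R.
    move=> x y; rewrite /R tsym'; congr (_ && _); exact: andbC.
  move=> a b Ha Hb; apply: (connect_trans (toL a Ha)).
  by rewrite (sym_connect_sym Rsym); exact: toL.
- move=> n.
  apply: leq_trans (alphaU _ _ _) _.
  have H2 : alpha e (\bigcup_(m in [set m | t n m]) bdry e (X m n)) <= degree t n * (k * d).
    apply: leq_trans (alpha_bigcup _ _ _) _.
    rewrite /degree -sum_nat_const; apply: leq_sum => m; rewrite inE => tnm.
    have tmn : t m n by rewrite tsym'.
    apply: leq_trans (alpha_bdry _ esym) _.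
    by apply: leq_mul; [exact: Hwid | exact: Had].
  case: (boolP (is_leaf t n)) => Hl.
    have H1 : alpha e [set v | lam v == n] <= 1.
      apply: leq_trans (alpha_card _ _) _.
      case: (pickP [pred v | lam v == n]) => [v0 /= Hv0 | none].
        have -> : [set v | lam v == n] = [set v0].
          apply/setP => x; rewrite !inE; apply/eqP/eqP => [E|->]; last exact/eqP.
          by apply: laminj; rewrite E (eqP Hv0).
        by rewrite cards1.
      have -> : [set v | lam v == n] = set0 by apply/setP => x; rewrite !inE; apply: none.
      by rewrite cards0.
    have Hd : degree t n <= 1 by [].
    have H3 : degree t n * (k * d) <= 1 * (k * d) by rewrite leq_mul2r Hd orbT.
    have := leq_add H1 (leq_trans H2 H3).
    move=> H; apply: leq_trans H _; nia.
  have -> : [set v | lam v == n] = set0.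
    apply/setP => x; rewrite !inE; apply/negP => /eqP E.
    by move: Hl; have -> : is_leaf t n by apply/Hleaf; exists x.
  rewrite alpha0 add0n; apply: leq_trans H2 _.
  rewrite (Hdeg n Hl); nia.
Qed.
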